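(* Let $\mathcal T$ be a triangulation of a compact oriented surface $S$ (possibly with boundary), with vertex set $V$ and boundary vertex set $V_\partial$. For every non-empty subset $A\subseteq V$, $$2|A|-|F(A)|+|Lk(A)|-|A\cap V_\partial|=2\chi(G(A)\setminus\partial S)+\chi(G(A)\cap\partial S).$$
   Context: $F(A)$ is the set of triangles of $\mathcal T$ having at least one vertex in $A$. $Lk(A)$ is the set of pairs $(e,v)$ with $v\in A$, $e$ an edge with no endpoint in $A$, and $e,v$ forming a triangle of $\mathcal T$. $G(A)$ is the union of the open cells (vertices, open edges, open triangles) of $\mathcal T$ having at least one vertex in $A$; for a union $X$ of open cells, $\chi(X)$ denotes the number of $0$-cells minus the number of $1$-cells plus the number of $2$-cells contained in $X$; $G(A)\setminus\partial S$ (resp. $G(A)\cap\partial S$) consists of the cells of $G(A)$ not contained (resp. contained) in $\partial S$. *)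

(* Defs.v *)
From mathcomp Require Import all_boot all_order all_algebra.
Set Implicit Arguments. Unset Strict Implicit. Unset Printing Implicit Defensive.
Import GRing.Theory Num.Theory.

Section Tri.
Variable V : finType.
Variable T : {set {set V}}.   (* the triangles (2-simplices), as 3-element vertex sets *)

(* cells of the triangulation: non-empty faces of triangles
   (vertices = 1-element sets, edges = 2-element sets, triangles = 3-element sets) *)
Definition cells : {set {set V}} :=
  [set c : {set V} | (c != set0) && [exists t in T, c \subset t]].

Definition edges : {set {set V}} := [set c in cells | #|c| == 2].

Definition n_tri (e : {set V}) : nat := #|[set t in T | e \subset t]|.

Definition bd_edges : {set {set V}} := [set e in edges | n_tri e == 1].
Definition Vbd : {set V} := [set v | [exists e in bd_edges, v \in e]].

(* cells contained in the boundary dS: boundary vertices and boundary edges *)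
Definition bd_cells : {set {set V}} := bd_edges :|: [set [set v] | v in Vbd].

Definition link_rel (v : V) : rel V := fun u w => [set v; u; w] \in T.

(* a cyclic orientation of a triangle given by an ordered triple (a,b,c);
   its directed edges are (a,b),(b,c),(c,a) *)
Definition dir_edges (o : V * V * V) : seq (V * V) :=
  let: (a, b, c) := o in [:: (a, b); (b, c); (c, a)].

Definition coherent_orientation (o : {set V} -> V * V * V) : Prop :=
  (forall t, t \in T -> let: (a, b, c) := o t in t = [set a; b; c])
  /\ (forall t1 t2 x y, t1 \in T -> t2 \in T -> t1 != t2 ->
        (x, y) \in dir_edges (o t1) -> (x, y) \notin dir_edges (o t2)).

Definition surface_triangulation : Prop :=
  [/\ (forall t, t \in T -> #|t| = 3),
      (forall v : V, exists2 t, t \in T & v \in t),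
      (forall e, e \in edges -> n_tri e = 1 \/ n_tri e = 2),
      (forall v u w, [set v; u] \in edges -> [set v; w] \in edges ->
          v != u -> v != w -> connect (link_rel v) u w)
    & exists o, coherent_orientation o].

Definition F (A : {set V}) : {set {set V}} := [set t in T | t :&: A != set0].

Definition Lk (A : {set V}) : {set {set V} * V} :=
  [set p : {set V} * V | [&& p.2 \in A, p.1 \in edges, p.1 :&: A == set0
                           & p.1 :|: [set p.2] \in T]].

(* G(A): open cells having at least one vertex in A *)
Definition G (A : {set V}) : {set {set V}} := [set c in cells | c :&: A != set0].

Definition chi (X : {set {set V}}) : int :=
  (#|[set c in X | #|c| == 1]|%:Z - #|[set c in X | #|c| == 2]|%:Z
   + #|[set c in X | #|c| == 3]|%:Z)%R.

End Tri.

(* Main.v *)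
Require Import Defs.
From mathcomp Require Import all_boot all_order all_algebra.
Import GRing.Theory Num.Theory.

Lemma disj_case (V : finType) (T : {set {set V}}) (A : {set V}) e :
  (forall t, t \in T -> #|t| = 3) -> e \in edges T -> e :&: A == set0 ->
  #|[set t in F T A | e \subset t]| = #|[set v | (e, v) \in Lk T A]|.
Proof.
move=> H3 eE eA.
have e2 : #|e| = 2 by move: eE; rewrite inE => /andP[_ /eqP].
have nA : forall v, v \in A -> v \notin e.
  move=> v vA; apply/negP => ve; move/eqP: eA; apply/eqP/set0Pn; exists v; by rewrite inE ve.
rewrite -(@card_in_imset _ _ (fun v => v |: e)); last first.
  move=> v w; rewrite !inE /= => /and4P[vA _ _ _] /and4P[wA _ _ _] evw.
  have : v \in w |: e by rewrite -evw setU11.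
  by case/setU1P => // ve; move: (nA v vA); rewrite ve.
apply: eq_card => t; rewrite !inE; apply/idP/idP.
  move=> /andP[/andP[tT tA] et].
  case/set0Pn: tA => x; rewrite inE => /andP[xt xA].
  have tx : t = x |: e.
    apply/eqP; rewrite eq_sym eqEcard subUset sub1set xt et /= H3 // cardsU1 (nA x xA) e2 //.
  apply/imsetP; exists x => //; rewrite inE /Lk inE /= xA eE eA /= setUC -tx tT //.
case/imsetP => v; rewrite inE /Lk inE /= => /and4P[vA _ _ vT] ->.
rewrite setUC vT /= subsetUl andbT; apply/set0Pn; exists v; by rewrite !inE vA eqxx orbT.
Qed.

Lemma pointwise (V : finType) (T : {set {set V}}) (A : {set V}) e :
  (forall t, t \in T -> #|t| = 3) ->
  (forall e, e \in edges T -> n_tri T e = 1 \/ n_tri T e = 2) ->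
  e \in edges T ->
  #|[set t in F T A | e \subset t]| = #|[set v | (e, v) \in Lk T A]|
     + ((e :&: A != set0) && (n_tri T e == 1))
     + 2 * ((e :&: A != set0) && (n_tri T e == 2)).
Proof.
move=> H3 Hn eE.
case: (boolP (e :&: A == set0)) => eA.
  by rewrite disj_case //= muln0 !addn0.
have -> : [set v | (e, v) \in Lk T A] = set0.
  by apply/setP => v; rewrite !inE /= (negbTE eA) /= !andbF.
rewrite cards0 add0n /=.
have -> : [set t in F T A | e \subset t] = [set t in T | e \subset t].
  apply/setP => t; rewrite !inE; apply/idP/idP.
    by case/andP => /andP[-> _] ->.
  case/andP => -> et; rewrite et andbT /=.
  case/set0Pn: eA => x; rewrite inE => /andP[xe xA].
  by apply/set0Pn; exists x; rewrite inE (subsetP et) // xA.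
rewrite -/(n_tri T e).
by case: (Hn e eE) => ->.
Qed.

Lemma card_sub_sum (U : finType) (S : {set U}) (P : pred U) :
  #|[set x in S | P x]| = \sum_(x in S) (P x : nat).
Proof.
rewrite -sum1_card.
rewrite big_mkcond /=.
rewrite [RHS]big_mkcond /=.
apply: eq_bigr => x _; rewrite inE. by case: (x \in S); case: (P x).
Qed.

Lemma tri_edges (V : finType) (T : {set {set V}}) t :
  (forall t, t \in T -> #|t| = 3) -> t \in T ->
  #|[set e in edges T | e \subset t]| = 3.
Proof.
move=> H3 tT.
have -> : [set e in edges T | e \subset t] = [set B : {set V} | B \subset t & #|B| == 2].
  apply/setP => B; rewrite !inE.
  apply/idP/idP.
    by move=> /andP[/andP[_ ->] ->].
  move=> /andP[Bt /eqP B2]; rewrite Bt B2 eqxx !andbT -card_gt0 B2 /=.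
  by apply/existsP; exists t; rewrite tT Bt.
by rewrite cards_draws H3.
Qed.

Lemma key (V : finType) (T : {set {set V}}) (A : {set V}) :
  (forall t, t \in T -> #|t| = 3) ->
  (forall e, e \in edges T -> n_tri T e = 1 \/ n_tri T e = 2) ->
  3 * #|F T A| = #|Lk T A|
     + #|[set e in edges T | (e :&: A != set0) && (n_tri T e == 1)]|
     + 2 * #|[set e in edges T | (e :&: A != set0) && (n_tri T e == 2)]|.
Proof.
move=> H3 Hn.
have s1 : 3 * #|F T A| = \sum_(t in F T A) \sum_(e in edges T) (e \subset t : nat).
  rewrite mulnC -sum_nat_const; apply: eq_bigr => t; rewrite inE => /andP[tT _].
  by rewrite -card_sub_sum tri_edges.
rewrite s1 exchange_big /=.
under eq_bigr => e _ do rewrite -card_sub_sum.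
rewrite !card_sub_sum big_distrr /=.
have LkE : forall e v, (e, v) \in Lk T A -> e \in edges T.
  by move=> e v; rewrite [_ \in Lk T A]inE => /and4P[].
have hL : #|Lk T A| = \sum_(e in edges T) #|[set v | (e, v) \in Lk T A]|.
  transitivity (\sum_(e : {set V}) \sum_(v : V) ((e,v) \in Lk T A : nat)).
    have c1 : #|Lk T A| = \sum_(p : {set V} * V) ((p \in Lk T A) : nat).
      rewrite -sum1_card big_mkcond /=; apply: congr_big => // p _; by case: (p \in Lk T A).
    rewrite c1 pair_big /=; by apply: congr_big => // -[e v] _.
  rewrite (bigID (fun e => e \in edges T)) /= [X in _ + X]big1 ?addn0.
    apply: congr_big => //  e eE; rewrite -sum1_card [RHS]big_mkcond /=.
    apply: congr_big => //  v _; rewrite [v \in _]inE; by case: ((e,v) \in Lk T A).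
  move=> e eE; apply: big1 => v _.
  by case: (boolP ((e,v) \in Lk T A)) => // /LkE; rewrite (negbTE eE).
rewrite hL -!big_split /=; apply: congr_big => //  e eE.
by rewrite pointwise.
Qed.

Lemma memG1 (V : finType) (T : {set {set V}}) (A : {set V}) x :
  (forall v : V, exists2 t, t \in T & v \in t) ->
  ([set x] \in G T A) = (x \in A).
Proof.
move=> Hc; rewrite /G /cells !in_set.
have -> : [set x] != set0 by apply/set0Pn; exists x; rewrite in_set1.
have -> : [exists t in T, [set x] \subset t].
  by case: (Hc x) => t tT xt; apply/existsP; exists t; rewrite tT sub1set.
rewrite /=; apply/idP/idP.
  by case/set0Pn => y; rewrite in_setI in_set1 => /andP[/eqP -> ].
by move=> xA; apply/set0Pn; exists x; rewrite in_setI in_set1 eqxx.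
Qed.

Lemma membd1 (V : finType) (T : {set {set V}}) x :
  ([set x] \in bd_cells T) = (x \in Vbd T).
Proof.
rewrite /bd_cells in_setU mem_imset; last exact: set1_inj.
suff -> : ([set x] \in bd_edges T) = false by [].
by rewrite /bd_edges /edges !in_set cards1 /= !andbF.
Qed.

Lemma membd2 (V : finType) (T : {set {set V}}) (c : {set V}) : #|c| == 2 ->
  (c \in bd_cells T) = (c \in edges T) && (n_tri T c == 1).
Proof.
move=> c2; rewrite /bd_cells in_setU /bd_edges in_set.
case: (boolP (c \in [set [set v] | v in Vbd T])); rewrite ?orbF //.
by case/imsetP => x _ cx; rewrite cx cards1 in c2.
Qed.

Lemma membd3 (V : finType) (T : {set {set V}}) (c : {set V}) : #|c| = 3 ->
  (c \in bd_cells T) = false.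
Proof.
move=> c3; rewrite /bd_cells in_setU /bd_edges /edges !in_set c3 /= andbF /=.
apply/negbTE/negP; case/imsetP => x _ cx; by rewrite cx cards1 in c3.
Qed.

Lemma cells3 (V : finType) (T : {set {set V}}) (c : {set V}) :
  (forall t, t \in T -> #|t| = 3) -> #|c| = 3 -> (c \in cells T) = (c \in T).
Proof.
move=> H3 c3; rewrite /cells in_set; apply/idP/idP.
  case/andP => _ /existsP[t /andP[tT ct]].
  have -> : c = t by apply/eqP; rewrite eqEcard ct H3 // c3.
  done.
move=> cT; rewrite -card_gt0 c3 /=; apply/existsP; exists c; by rewrite cT subxx.
Qed.

From mathcomp Require Import zify.
Import GRing.Theory Num.Theory.

Theorem lemma2p5_aux (V : finType) (T : {set {set V}}) (A : {set V}) :
  surface_triangulation T -> A != set0 ->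
  (2 * #|A|%:Z - #|F T A|%:Z + #|Lk T A|%:Z - #|A :&: Vbd T|%:Z
  = 2 * chi (G T A :\: bd_cells T) + chi (G T A :&: bd_cells T))%R.
Proof.
case=> H3 Hc Hn _ _ _.
set E1 := [set e in edges T | (e :&: A != set0) && (n_tri T e == 1)].
set E2 := [set e in edges T | (e :&: A != set0) && (n_tri T e == 2)].
have K := @key V T A H3 Hn; rewrite -/E1 -/E2 in K.
have a1 : #|[set c in G T A :\: bd_cells T | #|c| == 1]| = #|A :\: Vbd T|.
  rewrite -[RHS](card_imset _ (@set1_inj V)); apply: eq_card => c.
  rewrite in_set in_setD; case: (boolP (#|c| == 1)) => [/cards1P[x ->]|c1].
    rewrite memG1 // membd1 andbT mem_imset; last exact: set1_inj.
    by rewrite in_setD.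
  rewrite andbF; apply/esym/negbTE/negP; case/imsetP => x _ cx.
  by rewrite cx cards1 in c1.
have b1 : #|[set c in G T A :&: bd_cells T | #|c| == 1]| = #|A :&: Vbd T|.
  rewrite -[RHS](card_imset _ (@set1_inj V)); apply: eq_card => c.
  rewrite in_set in_setI; case: (boolP (#|c| == 1)) => [/cards1P[x ->]|c1].
    rewrite memG1 // membd1 andbT mem_imset; last exact: set1_inj.
    by rewrite in_setI.
  rewrite andbF; apply/esym/negbTE/negP; case/imsetP => x _ cx.
  by rewrite cx cards1 in c1.
have a2 : [set c in G T A :\: bd_cells T | #|c| == 2] = E2.
  apply/setP => c; rewrite in_set in_setD /E2 in_set.
  case: (boolP (#|c| == 2)) => c2.
    rewrite membd2 // /G in_set andbT.
    case: (boolP (c \in edges T)) => cE.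
      move: (cE); rewrite /edges in_set c2 andbT => ->.
      by case: (Hn c cE) => ->; rewrite ?andbT ?andbF.
    move: (cE); rewrite /edges in_set c2 andbT => /negbTE ->.
    by rewrite andbF.
  by rewrite andbF /edges in_set (negbTE c2) !andbF.
have b2 : [set c in G T A :&: bd_cells T | #|c| == 2] = E1.
  apply/setP => c; rewrite in_set in_setI /E1 in_set.
  case: (boolP (#|c| == 2)) => c2.
    rewrite membd2 // /G in_set andbT.
    case: (boolP (c \in edges T)) => cE.
      move: (cE); rewrite /edges in_set c2 andbT => ->.
      by case: (Hn c cE) => ->; rewrite ?andbT ?andbF.
    move: (cE); rewrite /edges in_set c2 andbT => /negbTE ->.
    by rewrite andbF.
  by rewrite andbF /edges in_set (negbTE c2) !andbF.
have a3 : [set c in G T A :\: bd_cells T | #|c| == 3] = F T A.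
  apply/setP => c; rewrite in_set in_setD [c \in G T A]in_set [c \in F T A]in_set.
  case: (boolP (#|c| == 3)) => /eqP c3.
    by rewrite membd3 // cells3 // andbT.
  rewrite andbF; case: (boolP (c \in T)) => // cT.
  by case: c3; rewrite H3.
have b3 : [set c in G T A :&: bd_cells T | #|c| == 3] = set0.
  apply/setP => c; rewrite in_set in_setI in_set0.
  case: (boolP (#|c| == 3)) => /eqP c3; last by rewrite andbF.
  by rewrite membd3 // andbF.
rewrite /chi a1 b1 a2 b2 a3 b3 cards0.
have hA := cardsID (Vbd T) A.
move: K hA.
move: #|A| #|A :&: Vbd T| #|A :\: Vbd T| #|F T A| #|Lk T A| #|E1| #|E2| => a b c f l e1 e2.
move=> K hA.
lia.
Qed.

Local Open Scope ring_scope.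

Theorem lemma2p5 (V : finType) (T : {set {set V}}) (A : {set V}) :
  surface_triangulation T -> A != set0 ->
  2 * #|A|%:Z - #|F T A|%:Z + #|Lk T A|%:Z - #|A :&: Vbd T|%:Z
  = 2 * chi (G T A :\: bd_cells T) + chi (G T A :&: bd_cells T).
Proof. exact: lemma2p5_aux. Qed.
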